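(* Forward-safe and backward-safe pairs are closed under the following constructions: (1) if $(f_1,g_1)$ and $(f_2,g_2)$ are forward-safe (resp. backward-safe) then so is $(f_1\times f_2,g_1\times g_2)$; (2) if each $(f_i,g_i)$ is forward-safe (resp. backward-safe) then so is $(\coprod_i f_i,\coprod_i g_i)$; (3) if $f:X\to Y$, $g:Y\to W$ form a forward-safe (resp. backward-safe) pair then so does $(\mathcal V\times f,\ \theta_W\circ(\mathcal V\times g))$, where $\mathcal V\times f:\mathcal V\times X\to\mathcal V\times Y$ and $\theta_W\circ(\mathcal V\times g):\mathcal V\times Y\to[\mathcal V]W$.
   Context: Nominal sets over a countably infinite set $\mathcal V$ of names; $\theta_W:\mathcal V\times W\to[\mathcal V]W$, $(x,u)\mapsto\langle x\rangle u$, the quotient map onto the name-abstraction. For equivariant $f:X\to Y$: $u$ is $f$-safe if $|\mathsf{supp}(u)|=\max\{|\mathsf{supp}(v)|:v\in f^{-1}(f(u))\}$ (maximum existing); $f$ is safe if every element of $Y$ has an $f$-safe preimage. For safe maps $f:X\to Y$, $g:Y\to W$: $(f,g)$ is forward-safe if for every $(g\circ f)$-safe $u\in X$, $f(u)$ is $g$-safe; $(f,g)$ is backward-safe if every $u\in X$ which is $f$-safe and such that $f(u)$ is $g$-safe is $(g\circ f)$-safe. *)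

(* Defs.v *)
(* Nominal sets over the countably infinite set of names
   V := nat, presented via swappings (Gabbay / Pitts). *)
From Stdlib Require Import Arith Lia List FunctionalExtensionality
  PropExtensionality ProofIrrelevance.
Import ListNotations.
Set Implicit Arguments.

Definition nswap (a b c : nat) : nat :=
  if Nat.eqb c a then b else if Nat.eqb c b then a else c.

Definition supports {T : Type} (sw : nat -> nat -> T -> T) (S : list nat) (x : T) : Prop :=
  forall a b, ~ In a S -> ~ In b S -> sw a b x = x.

Record nominal := Nominal {
  ncar :> Type;
  nsw : nat -> nat -> ncar -> ncar;
  nsw_id : forall a x, nsw a a x = x;
  nsw_inv : forall a b x, nsw a b (nsw a b x) = x;
  nsw_sw : forall a b c d x,
      nsw a b (nsw c d x) = nsw (nswap a b c) (nswap a b d) (nsw a b x);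
  nfin : forall x, exists S : list nat, supports nsw S x
}.
Arguments nsw {n} a b x.
Arguments nsw_id {n} a x.
Arguments nsw_inv {n} a b x.
Arguments nsw_sw {n} a b c d x.
Arguments nfin {n} x.

(** [a] is in the support of [x]: it belongs to every finite support of
    [x] (i.e. supp(x) is the least finite support). *)
Definition in_supp {X : nominal} (x : X) (a : nat) : Prop :=
  forall S, supports (@nsw X) S x -> In a S.

Definition supp_size {X : nominal} (x : X) (n : nat) : Prop :=
  exists l : list nat, NoDup l /\ length l = n /\ forall a, In a l <-> in_supp x a.

Definition equivariant {X Y : nominal} (f : X -> Y) : Prop :=
  forall a b x, f (nsw a b x) = nsw a b (f x).

Definition f_safe {X Y : nominal} (f : X -> Y) (u : X) : Prop :=
  exists n, supp_size u n /\
    forall v m, f v = f u -> supp_size v m -> m <= n.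

Definition safe {X Y : nominal} (f : X -> Y) : Prop :=
  equivariant f /\ forall y : Y, exists u : X, f u = y /\ f_safe f u.

Definition forward_safe {X Y W : nominal} (f : X -> Y) (g : Y -> W) : Prop :=
  safe f /\ safe g /\
  forall u : X, f_safe (fun x => g (f x)) u -> f_safe g (f u).

Definition backward_safe {X Y W : nominal} (f : X -> Y) (g : Y -> W) : Prop :=
  safe f /\ safe g /\
  forall u : X, f_safe f u -> f_safe g (f u) -> f_safe (fun x => g (f x)) u.

Lemma nswap_id a c : nswap a a c = c.
Proof. unfold nswap; destruct (Nat.eqb_spec c a); subst; auto. Qed.

Ltac nsolve := unfold nswap;
  repeat match goal with
    | |- context [Nat.eqb ?x ?x] => rewrite Nat.eqb_refl; cbn iota
    | |- context [Nat.eqb ?x ?y] => is_var x; is_var y;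
        destruct (Nat.eqb_spec x y); [subst|]; cbn iota
  end; congruence.

Lemma nswap_inv a b c : nswap a b (nswap a b c) = c.
Proof. nsolve. Qed.

Lemma nswap_sw a b c d e :
  nswap a b (nswap c d e) = nswap (nswap a b c) (nswap a b d) (nswap a b e).
Proof. nsolve. Qed.

Definition names : nominal.
Proof.
  refine (@Nominal nat nswap nswap_id nswap_inv nswap_sw _).
  intro c; exists [c]; intros a b Ha Hb; unfold nswap.
  destruct (Nat.eqb_spec c a) as [->|]; [exfalso; apply Ha; left; auto|].
  destruct (Nat.eqb_spec c b) as [->|]; [exfalso; apply Hb; left; auto|auto].
Defined.

Definition prod_nom (X Y : nominal) : nominal.
Proof.
  refine (@Nominal (X * Y) (fun a b p => (nsw a b (fst p), nsw a b (snd p)))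
            _ _ _ _).
  - intros a [x y]; simpl; rewrite !nsw_id; auto.
  - intros a b [x y]; simpl; rewrite !nsw_inv; auto.
  - intros a b c d [x y]; simpl; f_equal; apply nsw_sw.
  - intros [x y]; destruct (nfin x) as [S1 H1]; destruct (nfin y) as [S2 H2].
    exists (S1 ++ S2); intros a b Ha Hb; simpl.
    rewrite in_app_iff in Ha, Hb.
    rewrite H1, H2; auto; tauto.
Defined.

Definition prod_map {X1 Y1 X2 Y2 : nominal} (f1 : X1 -> Y1) (f2 : X2 -> Y2)
  : prod_nom X1 X2 -> prod_nom Y1 Y2 := fun p => (f1 (fst p), f2 (snd p)).

Definition coprod_nom (I : Type) (X : I -> nominal) : nominal.
Proof.
  refine (@Nominal {i : I & X i} (fun a b p => existT _ (projT1 p) (nsw a b (projT2 p)))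
            _ _ _ _).
  - intros a [i x]; simpl; rewrite nsw_id; auto.
  - intros a b [i x]; simpl; rewrite nsw_inv; auto.
  - intros a b c d [i x]; simpl; f_equal; apply nsw_sw.
  - intros [i x]; destruct (nfin x) as [S H]; exists S; intros a b Ha Hb; simpl.
    rewrite H; auto.
Defined.

Definition coprod_map (I : Type) (X Y : I -> nominal) (f : forall i, X i -> Y i)
  : coprod_nom X -> coprod_nom Y :=
  fun p => existT _ (projT1 p) (f (projT1 p) (projT2 p)).

Arguments coprod_map {I X Y} f p.

Definition quot_nom (X : nominal) (R : X -> X -> Prop)
  (HR : forall a b x y, R x y -> R (nsw a b x) (nsw a b y)) : nominal.
Proof.
  assert (Hsig : forall (p q : {P : X -> Prop | exists x, P = R x}),
             proj1_sig p = proj1_sig q -> p = q).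
  { intros [P HP] [Q HQ]; simpl; intros ->; f_equal; apply proof_irrelevance. }
  assert (Hsw : forall a b (p : {P : X -> Prop | exists x, P = R x}),
             exists x, (fun y => proj1_sig p (nsw a b y)) = R x).
  { intros a b [P [x ->]]; simpl; exists (nsw a b x).
    extensionality y; apply propositional_extensionality; split; intro H.
    - apply HR with (a := a) (b := b) in H; rewrite nsw_inv in H; auto.
    - apply HR with (a := a) (b := b) in H; rewrite nsw_inv in H; auto. }
  refine (@Nominal {P : X -> Prop | exists x, P = R x}
            (fun a b p => exist _ _ (Hsw a b p)) _ _ _ _).
  - intros a p; apply Hsig; simpl; extensionality y; rewrite nsw_id; auto.
  - intros a b p; apply Hsig; simpl; extensionality y; rewrite nsw_inv; auto.
  - intros a b c d p; apply Hsig; simpl; extensionality y.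
    f_equal.
    rewrite <- (nsw_inv a b (nsw c d (nsw a b y))).
    rewrite (nsw_sw a b c d), nsw_inv; auto.
  - intros [P [x ->]]; destruct (nfin x) as [S H]; exists S; intros a b Ha Hb.
    apply Hsig; simpl; extensionality y; apply propositional_extensionality.
    split; intro H'.
    + apply HR with (a := a) (b := b) in H'; rewrite nsw_inv, H in H'; auto.
    + rewrite <- (H a b Ha Hb) in H'.
      apply HR with (a := a) (b := b) in H'; rewrite nsw_inv in H'; auto.
Defined.

Definition quot_map (X : nominal) (R : X -> X -> Prop)
  (HR : forall a b x y, R x y -> R (nsw a b x) (nsw a b y)) : X -> @quot_nom X R HR :=
  fun x => exist _ (R x) (ex_intro _ x eq_refl).

(** Alpha-equivalence on V x W: <a>x = <b>y iff for all but finitely many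
    names c, (a c).x = (b c).y. *)
Definition alpha (W : nominal) (p q : prod_nom names W) : Prop :=
  exists L : list nat, forall c, ~ In c L ->
    nsw (fst p) c (snd p) = nsw (fst q) c (snd q).

Lemma alpha_eqv (W : nominal) :
  forall a b (x y : prod_nom names W), alpha x y -> alpha (nsw a b x) (nsw a b y).
Proof.
  intros a b [a1 x] [b1 y] [L HL]; simpl in *.
  exists (map (nswap a b) L); intros c Hc; simpl.
  assert (Hc' : ~ In (nswap a b c) L).
  { intro Hin; apply Hc; rewrite <- (nswap_inv a b c); apply in_map; auto. }
  pose proof (f_equal (nsw a b) (HL _ Hc')) as E.
  rewrite nsw_sw, (nsw_sw a b b1), nswap_inv in E; exact E.
Qed.

Definition abs_nom (W : nominal) : nominal := @quot_nom (prod_nom names W) (@alpha W) (@alpha_eqv W).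

Definition theta (W : nominal) : prod_nom names W -> abs_nom W :=
  @quot_map (prod_nom names W) (@alpha W) (@alpha_eqv W).

Definition Vx {X Y : nominal} (f : X -> Y) : prod_nom names X -> prod_nom names Y :=
  fun p => (fst p, f (snd p)).

(* Main.v *)
Require Import Defs.
From Stdlib Require Import Arith Lia List FunctionalExtensionality
  PropExtensionality ProofIrrelevance Classical ClassicalEpsilon Eqdep.
Import ListNotations.
Set Implicit Arguments.

Lemma fresh (l : list nat) : exists e, ~ In e l.
Proof.
  exists (S (fold_right max 0 l)).
  assert (H : forall a, In a l -> a <= fold_right max 0 l).
  { induction l as [|x l IH]; simpl; intros b Hb; [destruct Hb|].
    destruct Hb as [->|Hb]; [lia|specialize (IH b Hb); lia]. }
  intro Hi; apply H in Hi; lia.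
Qed.

Definition card (P : nat -> Prop) (n : nat) : Prop :=
  exists l, NoDup l /\ length l = n /\ forall a, In a l <-> P a.
Definition fin (P : nat -> Prop) := exists l, forall a, P a -> In a l.

Lemma filter_ex (P : nat -> Prop) (l : list nat) :
  exists l', NoDup l' /\ forall a, In a l' <-> In a l /\ P a.
Proof.
  induction l as [|x l IH].
  - exists []; split; [constructor|simpl; tauto].
  - destruct IH as [l' [Hn Hl]].
    destruct (classic (P x /\ ~ In x l')) as [[Hp Hni]|Hno].
    + exists (x :: l'); split; [constructor; auto|].
      intro a; simpl; rewrite Hl; split; [intros [->|[]]; auto|].
      intros [[->|H] Ha]; auto.
    + exists l'; split; auto; intro a; rewrite Hl; simpl; split; [tauto|].
      intros [[<-|H] Ha]; [|tauto].
      apply NNPP; intro Hn'; apply Hno; split; auto; intro Hi; apply Hn'; apply Hl; auto.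
Qed.

Lemma card_ex P : fin P -> exists n, card P n.
Proof.
  intros [l Hl]; destruct (filter_ex P l) as [l' [Hn H]].
  exists (length l'), l'; repeat split; auto.
  - intro Ha; apply H in Ha; tauto.
  - intro Ha; apply H; auto.
Qed.

Lemma card_unique P n m : card P n -> card P m -> n = m.
Proof.
  intros [l1 [N1 [L1 H1]]] [l2 [N2 [L2 H2]]]; subst.
  assert (length l1 <= length l2).
  { apply NoDup_incl_length; auto; intros a Ha; apply H2, H1; auto. }
  assert (length l2 <= length l1).
  { apply NoDup_incl_length; auto; intros a Ha; apply H1, H2; auto. }
  lia.
Qed.

Definition cardp (P : nat -> Prop) : nat := epsilon (inhabits 0) (fun n => card P n).

Lemma cardp_spec P : fin P -> card P (cardp P).
Proof. intro H; unfold cardp; apply epsilon_spec; apply card_ex; auto. Qed.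

Lemma card_fin P n : card P n -> fin P.
Proof. intros [l [_ [_ H]]]; exists l; intros a Ha; apply H; auto. Qed.

Lemma cardp_eq P n : card P n -> cardp P = n.
Proof. intro H; apply (card_unique (P:=P)); auto; apply cardp_spec; eapply card_fin; eauto. Qed.

Lemma cardp_ext P Q : (forall a, P a <-> Q a) -> cardp P = cardp Q.
Proof.
  intro H; assert (P = Q) as -> by (extensionality a; apply propositional_extensionality; auto).
  auto.
Qed.

Lemma fin_sub P Q : fin Q -> (forall a, P a -> Q a) -> fin P.
Proof. intros [l Hl] H; exists l; auto. Qed.

Arguments fin_sub {P Q}.

Lemma fin_union P Q : fin P -> fin Q -> fin (fun a => P a \/ Q a).
Proof.
  intros [l1 H1] [l2 H2]; exists (l1 ++ l2); intros a [Ha|Ha]; apply in_app_iff; auto.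
Qed.

Lemma cardp_disj P Q : fin P -> fin Q -> (forall a, P a -> Q a -> False) ->
  cardp (fun a => P a \/ Q a) = cardp P + cardp Q.
Proof.
  intros FP FQ D.
  destruct (cardp_spec FP) as [l1 [N1 [L1 H1]]].
  destruct (cardp_spec FQ) as [l2 [N2 [L2 H2]]].
  apply cardp_eq; exists (l1 ++ l2); repeat split.
  - apply NoDup_app; auto; intros a Ha Hb; apply (D a); [apply H1|apply H2]; auto.
  - rewrite length_app; lia.
  - intro Ha; apply in_app_iff in Ha; destruct Ha; [left; apply H1|right; apply H2]; auto.
  - intros [Ha|Ha]; apply in_app_iff; [left; apply H1|right; apply H2]; auto.
Qed.

Lemma cardp_mono P Q : fin Q -> (forall a, P a -> Q a) -> cardp P <= cardp Q.
Proof.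
  intros FQ H.
  destruct (cardp_spec FQ) as [l2 [N2 [L2 H2]]].
  destruct (cardp_spec (fin_sub FQ H)) as [l1 [N1 [L1 H1]]].
  rewrite <- L1, <- L2; apply NoDup_incl_length; auto.
  intros a Ha; apply H2, H, H1; auto.
Qed.

Lemma cardp_split P Q : fin P ->
  cardp P = cardp (fun a => P a /\ Q a) + cardp (fun a => P a /\ ~ Q a).
Proof.
  intro FP; rewrite <- cardp_disj.
  - apply cardp_ext; intro a; destruct (classic (Q a)); tauto.
  - apply (fin_sub FP); tauto.
  - apply (fin_sub FP); tauto.
  - tauto.
Qed.

Lemma cardp_union_inter A B : fin A -> fin B ->
  cardp (fun a => A a \/ B a) + cardp (fun a => A a /\ B a) = cardp A + cardp B.
Proof.
  intros FA FB.
  rewrite (@cardp_split _ A (fin_union FA FB)).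
  rewrite (@cardp_split B A FB).
  rewrite (cardp_ext (fun a => (A a \/ B a) /\ A a) A) by tauto.
  rewrite (cardp_ext (fun a => (A a \/ B a) /\ ~ A a) (fun a => B a /\ ~ A a)) by tauto.
  rewrite (cardp_ext (fun a => A a /\ B a) (fun a => B a /\ A a)) by tauto.
  lia.
Qed.

Lemma cardp_single a : cardp (fun c => c = a) = 1.
Proof.
  apply cardp_eq; exists [a]; repeat split.
  - constructor; [simpl; tauto|constructor].
  - intros [H|[]]; auto.
  - intros ->; left; auto.
Qed.

Lemma cardp_sub_eq P Q : fin Q -> (forall a, P a -> Q a) -> cardp Q <= cardp P ->
  forall a, Q a -> P a.
Proof.
  intros FQ H Hle a Qa; apply NNPP; intro nP.
  rewrite (@cardp_split Q P FQ) in Hle.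
  rewrite (cardp_ext (fun a => Q a /\ P a) P) in Hle by (intro; split; [tauto|auto]).
  assert (1 <= cardp (fun b => Q b /\ ~ P b)).
  { rewrite <- (cardp_single a); apply cardp_mono; [apply (fin_sub FQ); tauto|].
    intros b ->; auto. }
  lia.
Qed.

Lemma cardp_bij (f : nat -> nat) P : (forall x, f (f x) = x) -> fin P ->
  cardp (fun c => P (f c)) = cardp P.
Proof.
  intros Hf FP; destruct (cardp_spec FP) as [l [N [L H]]].
  apply cardp_eq; exists (map f l); repeat split.
  - apply NoDup_map_NoDup_ForallPairs; auto.
    intros x y _ _ E; rewrite <- (Hf x), E; auto.
  - rewrite length_map; auto.
  - intro Hi; apply in_map_iff in Hi; destruct Hi as [y [<- Hy]]; rewrite Hf; apply H; auto.
  - intro Hc; apply in_map_iff; exists (f a); split; auto; apply H; auto.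
Qed.

Lemma nswap_l a b : nswap a b a = b.
Proof. nsolve. Qed.
Lemma nswap_r a b : nswap a b b = a.
Proof. nsolve. Qed.
Lemma nswap_o a b c : c <> a -> c <> b -> nswap a b c = c.
Proof. intros; unfold nswap; destruct (Nat.eqb_spec c a); destruct (Nat.eqb_spec c b); congruence. Qed.

Lemma nsw_sym (X : nominal) a b (x : X) : nsw a b x = nsw b a x.
Proof.
  pose proof (nsw_sw a b a b x) as H. rewrite nsw_inv, nswap_l, nswap_r in H.
  rewrite H at 2; rewrite nsw_inv; reflexivity.
Qed.

Lemma nsw_three (X : nominal) a d e (x : X) : d <> a -> d <> e ->
  nsw a e (nsw d e (nsw a e x)) = nsw d a x.
Proof.
  intros H1 H2; rewrite nsw_sw, nsw_inv, nswap_r, nswap_o; auto.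
Qed.

Lemma nin_supp_iff (X : nominal) (x : X) a :
  ~ in_supp x a <-> exists S, supports (@nsw X) S x /\ ~ In a S.
Proof.
  unfold in_supp; split.
  - intro H; apply not_all_ex_not in H; destruct H as [S HS]; exists S.
    split; [apply NNPP; intro; apply HS; tauto|intro; apply HS; auto].
  - intros [S [HS Ha]] H; apply Ha, H; auto.
Qed.

Lemma fresh_swap (X : nominal) (x : X) a b :
  ~ in_supp x a -> ~ in_supp x b -> nsw a b x = x.
Proof.
  intros Ha Hb; apply nin_supp_iff in Ha as [Sa [Ha1 Ha2]];
  apply nin_supp_iff in Hb as [Sb [Hb1 Hb2]].
  destruct (Nat.eq_dec a b) as [<-|Hab]; [apply nsw_id|].
  destruct (fresh (Sa ++ Sb ++ [a; b])) as [e He].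
  rewrite !in_app_iff in He; simpl in He.
  rewrite nsw_sym, <- (@nsw_three X a b e x); try tauto.
  rewrite (Ha1 a e), (Hb1 b e), (Ha1 a e); try tauto.
  all: try (intros ->; tauto).

Qed.

Lemma supp_fin (X : nominal) (x : X) : fin (in_supp x).
Proof. destruct (nfin x) as [S HS]; exists S; intros a Ha; apply Ha; auto. Qed.

Lemma supports_map (X : nominal) (x : X) S a b :
  supports (@nsw X) S x -> supports (@nsw X) (map (nswap a b) S) (nsw a b x).
Proof.
  intros H c d Hc Hd.
  assert (Hc' : ~ In (nswap a b c) S) by (intro Hi; apply Hc; rewrite <- (nswap_inv a b c); apply in_map; auto).
  assert (Hd' : ~ In (nswap a b d) S) by (intro Hi; apply Hd; rewrite <- (nswap_inv a b d); apply in_map; auto).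
  pose proof (nsw_sw a b (nswap a b c) (nswap a b d) x) as E.
  rewrite !nswap_inv, (H _ _ Hc' Hd') in E; auto.
Qed.

Lemma nin_supp_sw1 (X : nominal) (x : X) a b c :
  ~ in_supp x (nswap a b c) -> ~ in_supp (nsw a b x) c.
Proof.
  intro H; apply nin_supp_iff in H as [S [HS Hn]]; apply nin_supp_iff.
  exists (map (nswap a b) S); split; [apply supports_map; auto|].
  intro Hi; apply in_map_iff in Hi as [y [Ey Hy]]; apply Hn.
  rewrite <- Ey, nswap_inv; auto.
Qed.

Lemma supp_sw (X : nominal) (x : X) a b c :
  in_supp (nsw a b x) c <-> in_supp x (nswap a b c).
Proof.
  split; intro H; apply NNPP; intro H'.
  - apply (@nin_supp_sw1 X x a b c); auto.
  - apply (@nin_supp_sw1 X (nsw a b x) a b (nswap a b c)); [rewrite nswap_inv; auto|].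
    rewrite nsw_inv; auto.
Qed.

Definition sz {X : nominal} (x : X) : nat := cardp (in_supp x).

Lemma sz_sw (X : nominal) (x : X) a b : sz (nsw a b x) = sz x.
Proof.
  unfold sz; rewrite (cardp_ext (in_supp (nsw a b x)) (fun c => in_supp x (nswap a b c))).
  - apply cardp_bij; [apply nswap_inv|apply supp_fin].
  - intro; apply supp_sw.
Qed.

Lemma supp_equiv (X Y : nominal) (f : X -> Y) (x : X) a :
  equivariant f -> in_supp (f x) a -> in_supp x a.
Proof.
  intros E H; apply NNPP; intro H'; apply nin_supp_iff in H' as [S [HS Hn]].
  revert H; apply nin_supp_iff; exists S; split; auto.
  intros c d Hc Hd; rewrite <- E, HS; auto.
Qed.

Lemma supp_size_iff (X : nominal) (x : X) n : supp_size x n <-> n = sz x.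
Proof.
  split.
  - intro H; symmetry; apply cardp_eq; exact H.
  - intros ->; apply cardp_spec, supp_fin.
Qed.

Lemma f_safe_iff (X Y : nominal) (f : X -> Y) u :
  f_safe f u <-> forall v, f v = f u -> sz v <= sz u.
Proof.
  split.
  - intros [n [Hn H]] v Hv; apply supp_size_iff in Hn; subst.
    apply (H v); auto; apply supp_size_iff; auto.
  - intro H; exists (sz u); split; [apply supp_size_iff; auto|].
    intros v m Hv Hm; apply supp_size_iff in Hm; subst; auto.
Qed.

Lemma f_safe_ext (X Y : nominal) (f g : X -> Y) u :
  (forall x, f x = g x) -> f_safe f u -> f_safe g u.
Proof.
  intro H; assert (f = g) as -> by (extensionality x; auto); auto.
Qed.

Lemma f_safe_finer (X Y Z : nominal) (k1 : X -> Y) (k2 : X -> Z) u :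
  (forall v, k1 v = k1 u -> k2 v = k2 u) -> f_safe k2 u -> f_safe k1 u.
Proof. rewrite !f_safe_iff; intros H1 H2 v Hv; auto. Qed.

Lemma f_safe_transfer (X Y : nominal) (f : X -> Y) u u' :
  f u' = f u -> sz u' = sz u -> f_safe f u -> f_safe f u'.
Proof. rewrite !f_safe_iff; intros E S H v Hv; rewrite S; apply H; congruence. Qed.

Lemma supp_list (X : nominal) (x : X) : exists S, forall a, in_supp x a -> In a S.
Proof. apply supp_fin. Qed.

Lemma rename (X Y : nominal) (h : X -> Y) : equivariant h -> forall (L : list nat) (x : X),
  exists x', h x' = h x /\ sz x' = sz x /\
    forall a, in_supp x' a -> In a L -> in_supp (h x) a.
Proof.
  intros E L; induction L as [|c L IH]; intro x.
  - exists x; repeat split; auto; intros a _ [].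
  - destruct (IH x) as [x'' [H1 [H2 H3]]].
    destruct (classic (in_supp x'' c /\ ~ in_supp (h x) c)) as [[Hc Hnc]|Hno].
    + destruct (supp_list _ x'') as [S HS].
      destruct (fresh (S ++ c :: L)) as [e He]; rewrite in_app_iff in He; simpl in He.
      assert (Hne : ~ in_supp x'' e) by (intro Hi; apply HS in Hi; tauto).
      exists (nsw c e x''); repeat split.
      * rewrite E, fresh_swap; auto.
        -- rewrite H1; auto.
        -- intro Hi; apply Hne; eapply supp_equiv; eauto.
      * rewrite sz_sw; auto.
      * intros a Ha Hin; apply supp_sw in Ha.
        destruct (Nat.eq_dec a c) as [->|Hac].
        -- rewrite nswap_l in Ha; tauto.
        -- destruct Hin as [->|Hin]; [tauto|].
           rewrite nswap_o in Ha; [|auto|intros ->; tauto]. apply H3; auto.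
    + exists x''; repeat split; auto.
      intros a Ha [<-|Hin]; [|apply H3; auto].
      apply NNPP; intro; apply Hno; auto.
Qed.

Lemma supp_pair (X Y : nominal) (x : X) (y : Y) a :
  @in_supp (prod_nom X Y) (x, y) a <-> in_supp x a \/ in_supp y a.
Proof.
  split.
  - intro H; apply NNPP; intro Hn.
    assert (Hx : ~ in_supp x a) by tauto. assert (Hy : ~ in_supp y a) by tauto.
    apply nin_supp_iff in Hx as [Sx [Hx1 Hx2]]; apply nin_supp_iff in Hy as [Sy [Hy1 Hy2]].
    cut (In a (Sx ++ Sy)); [rewrite in_app_iff; tauto|apply H].
    intros c d Hc Hd; rewrite in_app_iff in Hc, Hd; simpl.
    rewrite Hx1, Hy1; tauto.
  - intros [H|H] S HS; apply H; intros c d Hc Hd; pose proof (HS c d Hc Hd) as E;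
      simpl in E; injection E; auto.
Qed.

Lemma sz_pair (X Y : nominal) (x : X) (y : Y) :
  @sz (prod_nom X Y) (x, y) + cardp (fun a => in_supp x a /\ in_supp y a) = sz x + sz y.
Proof.
  unfold sz at 1; rewrite (cardp_ext _ (fun a => in_supp x a \/ in_supp y a)) by (intro; apply supp_pair).
  apply cardp_union_inter; apply supp_fin.
Qed.

Lemma prod_fiber (X1 Y1 X2 Y2 : nominal) (h1 : X1 -> Y1) (h2 : X2 -> Y2) v1 v2 u1 u2 :
  @prod_map X1 Y1 X2 Y2 h1 h2 (v1, v2) = prod_map h1 h2 (u1, u2) <-> h1 v1 = h1 u1 /\ h2 v2 = h2 u2.
Proof.
  unfold prod_map; simpl; split; [intro E; injection E; auto|intros [-> ->]; auto].
Qed.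

Lemma fin_inter_l P Q : fin P -> fin (fun a => P a /\ Q a).
Proof. intro F; apply (fin_sub F); tauto. Qed.

Lemma prod_safe_iff (X1 Y1 X2 Y2 : nominal) (h1 : X1 -> Y1) (h2 : X2 -> Y2) u1 u2 :
  equivariant h1 -> equivariant h2 ->
  (f_safe (@prod_map X1 Y1 X2 Y2 h1 h2) (u1, u2) <-> f_safe h1 u1 /\ f_safe h2 u2 /\
    (forall a, in_supp u1 a -> in_supp u2 a -> in_supp (h1 u1) a /\ in_supp (h2 u2) a)).
Proof.
  intros E1 E2; rewrite !f_safe_iff; split.
  - intro H.
    destruct (supp_list _ u2) as [S2 HS2]; destruct (supp_list _ u1) as [S1 HS1].
    split; [|split].
    + intros v1 Hv1.
      destruct (rename E1 S2 v1) as [v1' [R1 [R2 R3]]].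
      specialize (H (v1', u2)); rewrite prod_fiber in H.
      assert (Hle := H (conj (eq_trans R1 Hv1) eq_refl)).
      pose proof (@sz_pair _ _ v1' u2); pose proof (@sz_pair _ _ u1 u2).
      assert (cardp (fun a => in_supp v1' a /\ in_supp u2 a) <= cardp (fun a => in_supp u1 a /\ in_supp u2 a)).
      { apply cardp_mono; [apply fin_inter_l, supp_fin|].
        intros a [Ha1 Ha2]; split; auto. apply (supp_equiv E1).
        rewrite <- Hv1; apply R3; auto. }
      lia.
    + intros v2 Hv2.
      destruct (rename E2 S1 v2) as [v2' [R1 [R2 R3]]].
      specialize (H (u1, v2')); rewrite prod_fiber in H.
      assert (Hle := H (conj eq_refl (eq_trans R1 Hv2))).
      pose proof (@sz_pair _ _ u1 v2'); pose proof (@sz_pair _ _ u1 u2).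
      assert (cardp (fun a => in_supp u1 a /\ in_supp v2' a) <= cardp (fun a => in_supp u1 a /\ in_supp u2 a)).
      { apply cardp_mono; [apply fin_inter_l, supp_fin|].
        intros a [Ha1 Ha2]; split; auto. apply (supp_equiv E2).
        rewrite <- Hv2; apply R3; auto. }
      lia.
    + intros a Ha1 Ha2; split.
      * destruct (rename E1 S2 u1) as [v1' [R1 [R2 R3]]].
        specialize (H (v1', u2)); rewrite prod_fiber in H.
        assert (Hle := H (conj R1 eq_refl)).
        pose proof (@sz_pair _ _ v1' u2); pose proof (@sz_pair _ _ u1 u2).
        assert (cardp (fun a => in_supp v1' a /\ in_supp u2 a) <= cardp (fun a => in_supp (h1 u1) a /\ in_supp u2 a)).
        { apply cardp_mono; [apply fin_inter_l, supp_fin|].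
          intros b [Hb1 Hb2]; split; auto. }
        assert (Hs := @cardp_sub_eq (fun a => in_supp (h1 u1) a /\ in_supp u2 a)
                       (fun a => in_supp u1 a /\ in_supp u2 a) (fin_inter_l _ (supp_fin _ _))).
        refine (proj1 (Hs _ _ a (conj Ha1 Ha2))).
        -- intros b [Hb1 Hb2]; split; auto; eapply supp_equiv; eauto.
        -- lia.
      * destruct (rename E2 S1 u2) as [v2' [R1 [R2 R3]]].
        specialize (H (u1, v2')); rewrite prod_fiber in H.
        assert (Hle := H (conj eq_refl R1)).
        pose proof (@sz_pair _ _ u1 v2'); pose proof (@sz_pair _ _ u1 u2).
        assert (cardp (fun a => in_supp u1 a /\ in_supp v2' a) <= cardp (fun a => in_supp u1 a /\ in_supp (h2 u2) a)).
        { apply cardp_mono; [apply fin_inter_l, supp_fin|].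
          intros b [Hb1 Hb2]; split; auto. }
        assert (Hs := @cardp_sub_eq (fun a => in_supp u1 a /\ in_supp (h2 u2) a)
                       (fun a => in_supp u1 a /\ in_supp u2 a) (fin_inter_l _ (supp_fin _ _))).
        refine (proj2 (Hs _ _ a (conj Ha1 Ha2))).
        -- intros b [Hb1 Hb2]; split; auto; eapply supp_equiv; eauto.
        -- lia.
  - intros [H1 [H2 D]] [v1 v2] Hv; apply prod_fiber in Hv as [Hv1 Hv2].
    pose proof (@sz_pair _ _ v1 v2); pose proof (@sz_pair _ _ u1 u2).
    specialize (H1 v1 Hv1); specialize (H2 v2 Hv2).
    assert (cardp (fun a => in_supp u1 a /\ in_supp u2 a) <= cardp (fun a => in_supp v1 a /\ in_supp v2 a)).
    { apply cardp_mono; [apply fin_inter_l, supp_fin|].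
      intros a [Ha1 Ha2]; destruct (D a Ha1 Ha2) as [D1 D2]; split.
      - apply (supp_equiv E1); rewrite Hv1; auto.
      - apply (supp_equiv E2); rewrite Hv2; auto. }
    lia.
Qed.

Lemma prod_equiv (X1 Y1 X2 Y2 : nominal) (h1 : X1 -> Y1) (h2 : X2 -> Y2) :
  equivariant h1 -> equivariant h2 -> equivariant (@prod_map X1 Y1 X2 Y2 h1 h2).
Proof. intros E1 E2 a b [x y]; unfold prod_map; simpl; rewrite E1, E2; auto. Qed.

Lemma prod_safe (X1 Y1 X2 Y2 : nominal) (h1 : X1 -> Y1) (h2 : X2 -> Y2) :
  safe h1 -> safe h2 -> safe (@prod_map X1 Y1 X2 Y2 h1 h2).
Proof.
  intros [E1 S1] [E2 S2]; split; [apply prod_equiv; auto|].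
  intros [y1 y2].
  destruct (S1 y1) as [u1 [U1 F1]]; destruct (S2 y2) as [u2 [U2 F2]].
  destruct (supp_list _ u2) as [L1 HL1].
  destruct (rename E1 L1 u1) as [u1' [R1 [R2 R3]]].
  destruct (supp_list _ u1') as [L2 HL2].
  destruct (rename E2 L2 u2) as [u2' [Q1 [Q2 Q3]]].
  exists (u1', u2'); split; [unfold prod_map; simpl; congruence|].
  apply prod_safe_iff; auto; split; [|split].
  - eapply f_safe_transfer; eauto.
  - eapply f_safe_transfer; eauto.
  - intros a Ha1 Ha2.
    assert (T2 : in_supp (h2 u2) a) by (apply Q3; auto).
    assert (T1 : in_supp (h1 u1) a) by (apply R3; auto; apply HL1; apply (supp_equiv E2 T2)).
    rewrite R1, Q1; auto.
Qed.

Lemma comp_equiv (X Y W : nominal) (f : X -> Y) (g : Y -> W) :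
  equivariant f -> equivariant g -> equivariant (fun x => g (f x)).
Proof. intros E F a b x; rewrite E, F; auto. Qed.

Lemma part1f (X1 Y1 W1 X2 Y2 W2 : nominal)
     (f1 : X1 -> Y1) (g1 : Y1 -> W1) (f2 : X2 -> Y2) (g2 : Y2 -> W2) :
     forward_safe f1 g1 -> forward_safe f2 g2 ->
     forward_safe (prod_map f1 f2) (prod_map g1 g2).
Proof.
  intros [Sf1 [Sg1 H1]] [Sf2 [Sg2 H2]].
  split; [apply prod_safe; auto|split; [apply prod_safe; auto|]].
  intros [u1 u2] Hu.
  apply (f_safe_ext (prod_map (fun x => g1 (f1 x)) (fun x => g2 (f2 x)))) in Hu;
    [|intros [? ?]; reflexivity].
  apply prod_safe_iff in Hu as [A1 [A2 D]];
    [|apply comp_equiv; [apply Sf1|apply Sg1]|apply comp_equiv; [apply Sf2|apply Sg2]].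
  change (prod_map f1 f2 (u1, u2)) with (f1 u1, f2 u2).
  apply prod_safe_iff; [apply Sg1|apply Sg2|]; split; [|split]; auto.
  intros a Ha1 Ha2; apply D; [apply (supp_equiv (proj1 Sf1) Ha1)|apply (supp_equiv (proj1 Sf2) Ha2)].
Qed.

Lemma part1b (X1 Y1 W1 X2 Y2 W2 : nominal)
     (f1 : X1 -> Y1) (g1 : Y1 -> W1) (f2 : X2 -> Y2) (g2 : Y2 -> W2) :
     backward_safe f1 g1 -> backward_safe f2 g2 ->
     backward_safe (prod_map f1 f2) (prod_map g1 g2).
Proof.
  intros [Sf1 [Sg1 H1]] [Sf2 [Sg2 H2]].
  split; [apply prod_safe; auto|split; [apply prod_safe; auto|]].
  intros [u1 u2] Hu Hv.
  apply (@f_safe_ext _ _ (prod_map (fun x => g1 (f1 x)) (fun x => g2 (f2 x))));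
    [intros [? ?]; reflexivity|].
  change (prod_map f1 f2 (u1, u2)) with (f1 u1, f2 u2) in Hv.
  apply prod_safe_iff in Hu as [A1 [A2 D]]; [|apply Sf1|apply Sf2].
  apply prod_safe_iff in Hv as [B1 [B2 D']]; [|apply Sg1|apply Sg2].
  apply prod_safe_iff;
    [apply comp_equiv; [apply Sf1|apply Sg1]|apply comp_equiv; [apply Sf2|apply Sg2]|].
  split; [|split]; auto.
  intros a Ha1 Ha2; destruct (D a Ha1 Ha2); apply D'; auto.
Qed.

Lemma supports_ex (I : Type) (X : I -> nominal) i (x : X i) S :
  supports (@nsw (coprod_nom X)) S (existT _ i x) <-> supports (@nsw (X i)) S x.
Proof.
  split; intros H c d Hc Hd.
  - pose proof (H c d Hc Hd) as E; simpl in E; apply inj_pair2 in E; auto.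
  - simpl; rewrite H; auto.
Qed.

Lemma sz_ex (I : Type) (X : I -> nominal) i (x : X i) :
  @sz (coprod_nom X) (existT _ i x) = sz x.
Proof.
  unfold sz; apply cardp_ext; intro a; unfold in_supp; split; intros H S HS; apply H;
    apply supports_ex; auto.
Qed.

Lemma coprod_safe_iff (I : Type) (X Z : I -> nominal) (F : forall i, X i -> Z i) i (x : X i) :
  f_safe (coprod_map F) (existT _ i x) <-> f_safe (F i) x.
Proof.
  rewrite !f_safe_iff; split.
  - intros H v Hv; specialize (H (existT _ i v)); rewrite !sz_ex in H; apply H.
    unfold coprod_map; simpl; rewrite Hv; auto.
  - intros H [j v] Hv; unfold coprod_map in Hv; simpl in Hv.
    assert (j = i) by (apply (f_equal (@projT1 _ _)) in Hv; auto); subst.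
    apply inj_pair2 in Hv; rewrite !sz_ex; auto.
Qed.

Lemma coprod_equiv (I : Type) (X Z : I -> nominal) (F : forall i, X i -> Z i) :
  (forall i, equivariant (F i)) -> equivariant (coprod_map F).
Proof. intros E a b [i x]; unfold coprod_map; simpl; rewrite E; auto. Qed.

Lemma coprod_safe (I : Type) (X Z : I -> nominal) (F : forall i, X i -> Z i) :
  (forall i, safe (F i)) -> safe (coprod_map F).
Proof.
  intro S; split; [apply coprod_equiv; intro i; apply S|].
  intros [i y]; destruct (proj2 (S i) y) as [u [U1 U2]].
  exists (existT _ i u); split; [unfold coprod_map; simpl; rewrite U1; auto|].
  apply coprod_safe_iff; auto.
Qed.

Lemma part2f (I : Type) (X Y W : I -> nominal)
     (f : forall i, X i -> Y i) (g : forall i, Y i -> W i) :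
     (forall i, forward_safe (f i) (g i)) ->
     forward_safe (coprod_map f) (coprod_map g).
Proof.
  intro H; split; [apply coprod_safe; intro i; apply H|split; [apply coprod_safe; intro i; apply H|]].
  intros [i x] Hu.
  apply (f_safe_ext (coprod_map (fun i x => g i (f i x)))) in Hu; [|intros [? ?]; reflexivity].
  apply coprod_safe_iff in Hu.
  change (coprod_map f (existT _ i x)) with (existT (fun i => Y i) i (f i x)).
  apply coprod_safe_iff; apply H; auto.
Qed.

Lemma part2b (I : Type) (X Y W : I -> nominal)
     (f : forall i, X i -> Y i) (g : forall i, Y i -> W i) :
     (forall i, backward_safe (f i) (g i)) ->
     backward_safe (coprod_map f) (coprod_map g).
Proof.
  intro H; split; [apply coprod_safe; intro i; apply H|split; [apply coprod_safe; intro i; apply H|]].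
  intros [i x] Hu Hv.
  apply (@f_safe_ext _ _ (coprod_map (fun i x => g i (f i x)))); [intros [? ?]; reflexivity|].
  change (coprod_map f (existT _ i x)) with (existT (fun i => Y i) i (f i x)) in Hv.
  apply coprod_safe_iff in Hu; apply coprod_safe_iff in Hv.
  apply coprod_safe_iff; apply H; auto.
Qed.

Lemma supp_name (a c : nat) : @in_supp names a c <-> c = a.
Proof.
  split.
  - intro H.
    assert (Hs : supports (@nsw names) [a] a).
    { intros b d Hb Hd; simpl; unfold nswap.
      destruct (Nat.eqb_spec a b) as [->|]; [simpl in Hb; tauto|].
      destruct (Nat.eqb_spec a d) as [->|]; [simpl in Hd; tauto|auto]. }
    destruct (H _ Hs) as [->|[]]; auto.
  - intros E S HS; subst c; apply NNPP; intro Hn.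
    destruct (fresh (a :: S)) as [b Hb]; simpl in Hb.
    pose proof (HS a b Hn (fun H => Hb (or_intror H))) as E; simpl in E.
    rewrite nswap_l in E; apply Hb; left; auto.
Qed.

Lemma supp_V (X : nominal) a (x : X) c :
  @in_supp (prod_nom names X) (a, x) c <-> c = a \/ in_supp x c.
Proof. rewrite supp_pair, supp_name; tauto. Qed.

Lemma sz_V_in (X : nominal) a (x : X) : in_supp x a -> @sz (prod_nom names X) (a, x) = sz x.
Proof.
  intro H; unfold sz; apply cardp_ext; intro c; rewrite supp_V; split; [intros [->|]|]; auto.
Qed.

Lemma sz_V_out (X : nominal) a (x : X) : ~ in_supp x a -> @sz (prod_nom names X) (a, x) = S (sz x).
Proof.
  intro H; unfold sz.
  rewrite (cardp_ext _ (fun c => c = a \/ in_supp x c)) by (intro; apply supp_V).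
  rewrite cardp_disj, cardp_single; auto.
  - exists [a]; intros b ->; left; auto.
  - apply supp_fin.
  - intros b -> Hb; auto.
Qed.

Lemma sz_V_le (X : nominal) a (x : X) : @sz (prod_nom names X) (a, x) <= S (sz x).
Proof.
  destruct (classic (in_supp x a)); [rewrite sz_V_in|rewrite sz_V_out]; auto.
Qed.

Lemma fresh_for (X Y : nominal) (x : X) (y : Y) (a : nat) :
  exists c, ~ in_supp x c /\ ~ in_supp y c /\ c <> a.
Proof.
  destruct (supp_list _ x) as [S1 H1]; destruct (supp_list _ y) as [S2 H2].
  destruct (fresh (a :: S1 ++ S2)) as [c Hc]; simpl in Hc; rewrite in_app_iff in Hc.
  exists c; repeat split; intro H; [apply H1 in H|apply H2 in H|subst]; tauto.
Qed.

Lemma vx_char (X W Z : nominal) (h : X -> W) (k : prod_nom names X -> Z) a (x : X) :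
  equivariant h -> (forall p q, Vx h p = Vx h q -> k p = k q) ->
  f_safe k (a, x) -> f_safe h x /\ (in_supp x a -> in_supp (h x) a).
Proof.
  intros E K Hs; rewrite f_safe_iff in Hs; split.
  - apply f_safe_iff; intros x' Hx'.
    destruct (classic (in_supp (h x) a)) as [Ha|Ha].
    + assert (Hk : k (a, x') = k (a, x)) by (apply K; unfold Vx; simpl; rewrite Hx'; auto).
      specialize (Hs _ Hk).
      rewrite !sz_V_in in Hs; auto.
      * apply (supp_equiv E Ha).
      * rewrite <- Hx' in Ha; apply (supp_equiv E Ha).
    + destruct (fresh_for _ _ x' (h x) a) as [c [C1 [C2 C3]]].
      assert (Hh : h (nsw a c x') = h x) by (rewrite E, Hx', fresh_swap; auto).
      assert (Hk : k (a, nsw a c x') = k (a, x)) by (apply K; unfold Vx; simpl; rewrite Hh; auto).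
      specialize (Hs _ Hk).
      rewrite sz_V_out, sz_sw in Hs.
      * pose proof (sz_V_le _ a x); lia.
      * rewrite supp_sw, nswap_l; auto.
  - intros Hxa; apply NNPP; intro Hn.
    destruct (fresh_for _ _ x (h x) a) as [c [C1 [C2 C3]]].
    assert (Hh : h (nsw a c x) = h x) by (rewrite E, fresh_swap; auto).
    assert (Hk : k (a, nsw a c x) = k (a, x)) by (apply K; unfold Vx; simpl; rewrite Hh; auto).
    specialize (Hs _ Hk).
    rewrite sz_V_out, sz_sw, sz_V_in in Hs; auto; [lia|].
    rewrite supp_sw, nswap_l; auto.
Qed.

Lemma theta_alpha (W : nominal) (p q : prod_nom names W) : theta p = theta q -> alpha p q.
Proof.
  intro E; unfold theta, quot_map in E.
  apply (f_equal (@proj1_sig _ _)) in E; simpl in E.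
  rewrite E; exists []; auto.
Qed.

Lemma theta_char (X W : nominal) (h : X -> W) a (x : X) :
  equivariant h -> f_safe h x -> (in_supp x a -> in_supp (h x) a) ->
  f_safe (fun p => theta (Vx h p)) (a, x).
Proof.
  intros E Hs C; rewrite f_safe_iff in Hs |- *.
  intros [b x'] Hv; apply theta_alpha in Hv; destruct Hv as [L HL]; simpl in HL.
  destruct (fresh L) as [c Hc]; specialize (HL c Hc).
  assert (Hh : h (nsw a c (nsw b c x')) = h x) by (rewrite !E, HL, nsw_inv; auto).
  specialize (Hs _ Hh); rewrite !sz_sw in Hs.
  destruct (classic (in_supp x a)) as [Ha|Ha].
  - assert (Hb : in_supp x' b).
    { apply (supp_equiv E).
      assert (in_supp (nsw a c (h x)) c) by (rewrite supp_sw, nswap_r; auto).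
      rewrite <- HL, supp_sw, nswap_r in H; auto. }
    rewrite (@sz_V_in _ a x Ha); etransitivity; [apply Nat.eq_le_incl, sz_V_in, Hb|]; auto.
  - rewrite (@sz_V_out _ a x Ha); pose proof (sz_V_le _ b x'); lia.
Qed.

Lemma sig_eq (A : Type) (P : A -> Prop) (x y : sig P) : proj1_sig x = proj1_sig y -> x = y.
Proof. destruct x as [x Hx], y as [y Hy]; simpl; intros ->; f_equal; apply proof_irrelevance. Qed.

Lemma alpha_sw (W : nominal) a b (p y : prod_nom names W) :
  alpha (nsw a b p) y <-> alpha p (nsw a b y).
Proof.
  split; intro H.
  - apply (alpha_eqv a b) in H; rewrite nsw_inv in H; auto.
  - apply (alpha_eqv a b) in H; rewrite nsw_inv in H; auto.
Qed.

Lemma theta_equiv (W : nominal) : equivariant (@theta W).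
Proof.
  intros a b p; apply sig_eq.
  change (alpha (nsw a b p) = (fun y => alpha p (nsw a b y))).
  extensionality y; apply propositional_extensionality; apply alpha_sw.
Qed.

Lemma safe_prep (Y W : nominal) (h : Y -> W) : safe h ->
  forall a w, exists y, h y = w /\ f_safe h y /\ (in_supp y a -> in_supp w a).
Proof.
  intros [E S] a w; destruct (S w) as [y0 [Y0 F0]].
  destruct (classic (in_supp w a)) as [Hw|Hw]; [exists y0; auto|].
  destruct (fresh_for _ _ y0 w a) as [c [C1 [C2 C3]]].
  assert (Hh : h (nsw a c y0) = w) by (rewrite E, Y0, fresh_swap; auto).
  exists (nsw a c y0); repeat split; auto.
  - apply (f_safe_transfer (u:=y0)); [congruence|apply sz_sw|auto].
  - rewrite supp_sw, nswap_l; tauto.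
Qed.

Lemma Vx_equiv (X Y : nominal) (h : X -> Y) : equivariant h -> equivariant (Vx h).
Proof. intros E a b [c x]; unfold Vx; simpl; rewrite E; auto. Qed.

Lemma safe_Vx (X Y : nominal) (h : X -> Y) : safe h -> safe (Vx h).
Proof.
  intro Sh; split; [apply Vx_equiv, Sh|].
  intros [a w]; destruct (safe_prep Sh a w) as [y [Y1 [Y2 Y3]]].
  exists (a, y); split; [unfold Vx; simpl; rewrite Y1; auto|].
  apply (@f_safe_finer _ _ _ _ (fun p => theta (Vx h p))).
  - intros v Hv; rewrite Hv; auto.
  - apply theta_char; [apply Sh|auto|]. intro Ha; rewrite Y1; auto.
Qed.

Lemma safe_theta (X W : nominal) (h : X -> W) : safe h -> safe (fun p => theta (Vx h p)).
Proof.
  intro Sh; split.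
  - intros a b p; rewrite (Vx_equiv (proj1 Sh)), theta_equiv; auto.
  - intros q; destruct q as [P [[a w] HP]]; subst P.
    destruct (safe_prep Sh a w) as [y [Y1 [Y2 Y3]]].
    exists (a, y); split.
    + apply sig_eq; change (alpha (a, h y) = alpha (a, w)); rewrite Y1; auto.
    + apply theta_char; [apply Sh|auto|]. intro Ha; rewrite Y1; auto.
Qed.

Lemma part3f (X Y W : nominal) (f : X -> Y) (g : Y -> W) :
     forward_safe f g ->
     forward_safe (Vx f) (fun p => @theta W (Vx g p)).
Proof.
  intros [Sf [Sg H]]; split; [apply safe_Vx; auto|split; [apply safe_theta; auto|]].
  intros [a x] Hu.
  apply (@vx_char X W _ (fun x => g (f x))) in Hu as [A C].
  - change (f_safe (fun p => theta (Vx g p)) (a, f x)).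
    apply theta_char; [apply Sg|apply H; auto|].
    intro Ha; apply C; apply (supp_equiv (proj1 Sf) Ha).
  - apply comp_equiv; [apply Sf|apply Sg].
  - intros [? ?] [? ?] Hpq; unfold Vx in *; simpl in *; congruence.
Qed.

Lemma part3b (X Y W : nominal) (f : X -> Y) (g : Y -> W) :
     backward_safe f g ->
     backward_safe (Vx f) (fun p => @theta W (Vx g p)).
Proof.
  intros [Sf [Sg H]]; split; [apply safe_Vx; auto|split; [apply safe_theta; auto|]].
  intros [a x] Hu Hv.
  change (f_safe (fun p => theta (Vx g p)) (a, f x)) in Hv.
  apply (@vx_char X Y _ f) in Hu as [A1 C1]; [|apply Sf|intros p q Hpq; auto].
  apply (@vx_char Y W _ g) in Hv as [A2 C2]; [|apply Sg|intros p q Hpq; rewrite Hpq; auto].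
  apply (@f_safe_ext _ _ (fun p => theta (Vx (fun x => g (f x)) p))); [intros [? ?]; reflexivity|].
  apply theta_char; [apply comp_equiv; [apply Sf|apply Sg]|apply H; auto|].
  auto.
Qed.

Theorem lemma5p42 :
  (* (1) products *)
  (forall (X1 Y1 W1 X2 Y2 W2 : nominal)
     (f1 : X1 -> Y1) (g1 : Y1 -> W1) (f2 : X2 -> Y2) (g2 : Y2 -> W2),
     forward_safe f1 g1 -> forward_safe f2 g2 ->
     forward_safe (prod_map f1 f2) (prod_map g1 g2)) /\
  (forall (X1 Y1 W1 X2 Y2 W2 : nominal)
     (f1 : X1 -> Y1) (g1 : Y1 -> W1) (f2 : X2 -> Y2) (g2 : Y2 -> W2),
     backward_safe f1 g1 -> backward_safe f2 g2 ->
     backward_safe (prod_map f1 f2) (prod_map g1 g2)) /\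
  (* (2) coproducts *)
  (forall (I : Type) (X Y W : I -> nominal)
     (f : forall i, X i -> Y i) (g : forall i, Y i -> W i),
     (forall i, forward_safe (f i) (g i)) ->
     forward_safe (coprod_map f) (coprod_map g)) /\
  (forall (I : Type) (X Y W : I -> nominal)
     (f : forall i, X i -> Y i) (g : forall i, Y i -> W i),
     (forall i, backward_safe (f i) (g i)) ->
     backward_safe (coprod_map f) (coprod_map g)) /\
  (* (3) V x f and theta_W o (V x g) *)
  (forall (X Y W : nominal) (f : X -> Y) (g : Y -> W),
     forward_safe f g ->
     forward_safe (Vx f) (fun p => @theta W (Vx g p))) /\
  (forall (X Y W : nominal) (f : X -> Y) (g : Y -> W),
     backward_safe f g ->
     backward_safe (Vx f) (fun p => @theta W (Vx g p))).
Proof.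
  split; [exact part1f|split; [exact part1b|split; [exact part2f|split; [exact part2b|split; [exact part3f|exact part3b]]]]].
Qed.
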